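(* Let $S\in(0,1)$, $f_S,f_C,h_S,h_C>0$ and $\lambda_S,\lambda_C>0$. Put $A_S=\lambda_S/f_S$ and $A_C=\lambda_C/h_C$. The planar system \[ SB'=f_S\,(SB+A_S)(S-SB)-h_S\,CR\cdot SB,\qquad CR'=f_C\,CR\,(1-S-CR)-h_C\,(SB+A_C)\,CR \] has no limit cycle (no nonconstant periodic orbit) contained in the open rectangle $(0,S)\times(0,1-S)$.
   Context: Armed-revolt model with direct foreign intervention on Blue's side. A population of total size $1$ is split into a fixed fraction $S$ of supporters of Blue and $1-S$ of contrarians. $SB$ and $CR$ are the fractions of the total population that are supporters controlled by Blue and contrarians controlled by Red. The remaining fractions are $SR=S-SB$ and $CB=1-S-CR$. The full dynamics are $SB'=f_S\,SB\cdot SR-h_S\,CR\cdot SB+\lambda_S\,SR$, $SR'=-SB'$, $CR'=f_C\,CR\cdot CB-h_C\,SB\cdot CR-\lambda_C\,CR$, $CB'=-CR'$. The constants $\lambda_S,\lambda_C$ are the combat powers of the foreign force. These dynamics reduce to the planar system in the claim. *)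

(* Defs.v *)
From Stdlib Require Import Reals Lra.
Open Scope R_scope.

(* Right-hand side of the planar system, with A_S = lambda_S / f_S and
   A_C = lambda_C / h_C. *)
Definition SB_rhs (S fS hS lamS : R) (sb cr : R) : R :=
  fS * (sb + lamS / fS) * (S - sb) - hS * cr * sb.

Definition CR_rhs (S fC hC lamC : R) (sb cr : R) : R :=
  fC * cr * (1 - S - cr) - hC * (sb + lamC / hC) * cr.

Definition is_solution (S fS fC hS hC lamS lamC : R) (sb cr : R -> R) : Prop :=
  forall t : R,
    derivable_pt_lim sb t (SB_rhs S fS hS lamS (sb t) (cr t)) /\
    derivable_pt_lim cr t (CR_rhs S fC hC lamC (sb t) (cr t)).

(* Main.v *)
Require Import Defs.
From Stdlib Require Import Reals Lra Psatz Classical.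
Open Scope R_scope.

Lemma dl_eq f t l l' : derivable_pt_lim f t l -> l = l' -> derivable_pt_lim f t l'.
Proof. intros H ->; exact H. Qed.
Lemma dl_plus f g t df dg : derivable_pt_lim f t df -> derivable_pt_lim g t dg ->
  derivable_pt_lim (fun u => f u + g u) t (df + dg).
Proof. intros; now apply derivable_pt_lim_plus. Qed.
Lemma dl_minus f g t df dg : derivable_pt_lim f t df -> derivable_pt_lim g t dg ->
  derivable_pt_lim (fun u => f u - g u) t (df - dg).
Proof. intros; now apply derivable_pt_lim_minus. Qed.
Lemma dl_mult f g t df dg : derivable_pt_lim f t df -> derivable_pt_lim g t dg ->
  derivable_pt_lim (fun u => f u * g u) t (df * g t + f t * dg).
Proof. intros; now apply derivable_pt_lim_mult. Qed.
Lemma dl_const k t : derivable_pt_lim (fun _ => k) t 0.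
Proof. apply derivable_pt_lim_const. Qed.
Lemma dl_id t : derivable_pt_lim (fun u => u) t 1.
Proof. apply derivable_pt_lim_id. Qed.
Lemma dl_expK K t : derivable_pt_lim (fun u => exp (K * u)) t (exp (K * t) * K).
Proof.
  apply (derivable_pt_lim_comp (fun u => K * u) exp t K (exp (K*t))).
  - eapply dl_eq. apply dl_mult. apply dl_const. apply dl_id. cbv beta; ring.
  - apply derivable_pt_lim_exp.
Qed.

Lemma dl_cont f t l : derivable_pt_lim f t l -> forall eps, 0 < eps ->
  exists d, 0 < d /\ forall y, Rabs (y - t) < d -> Rabs (f y - f t) < eps.
Proof.
  intros H eps He.
  assert (C := derivable_continuous_pt f t (exist _ l H)).
  unfold continuity_pt, continue_in, limit1_in, limit_in in C.
  destruct (C eps He) as [d [Hd Hy]]. exists d; split; auto.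
  intros y Hyt. destruct (Req_dec y t) as [->|Hne].
  - rewrite Rminus_diag, Rabs_R0; auto.
  - apply (Hy y). split. split; [exact I| auto]. exact Hyt.
Qed.

Lemma dl_sign f s d : derivable_pt_lim f s d -> d < 0 -> forall eta, 0 < eta ->
  exists h, 0 < h < eta /\ f (s + h) < f s /\ f s < f (s - h).
Proof.
  intros H Hd eta He.
  destruct (H (-d/2)) as [del Hdel]; [lra|].
  set (h := Rmin (del/2) (eta/2)).
  assert (Hdp := cond_pos del).
  assert (h1 : 0 < h) by (unfold h; apply Rmin_glb_lt; lra).
  assert (h2 : h <= del/2) by apply Rmin_l.
  assert (h3 : h <= eta/2) by apply Rmin_r.
  exists h; split; [lra|].
  assert (A1 := Hdel h ltac:(lra) ltac:(rewrite Rabs_pos_eq; lra)).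
  assert (A2 := Hdel (-h) ltac:(lra) ltac:(rewrite Rabs_Ropp, Rabs_pos_eq; lra)).
  apply Rabs_def2 in A1. apply Rabs_def2 in A2.
  replace (s + - h) with (s - h) in A2 by ring.
  set (r1 := (f (s + h) - f s) / h) in A1.
  set (r2 := (f (s - h) - f s) / - h) in A2.
  assert (E1 : f (s + h) - f s = r1 * h) by (unfold r1; field; lra).
  assert (E2 : f (s - h) - f s = r2 * (- h)) by (unfold r2; field; lra).
  split; nra.
Qed.

Lemma no_upcross (w w' : R -> R) a b : a < b ->
  (forall t, derivable_pt_lim w t (w' t)) -> w a < 0 -> 0 < w b ->
  (forall t, w t = 0 -> w' t < 0) -> False.
Proof.
  intros Hab Hd Ha Hb Hz.
  set (A := fun t => a <= t <= b /\ w t < 0).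
  destruct (completeness A) as [s [Hub Hlub]].
  { exists b. intros t [Ht _]. lra. }
  { exists a. split; [lra|auto]. }
  assert (sa : a <= s) by (apply Hub; split; [lra|auto]).
  assert (sb : s <= b) by (apply Hlub; intros t [Ht _]; lra).
  destruct (Rtotal_order (w s) 0) as [Hn|[H0|Hp]].
  - assert (sb' : s < b) by (destruct (Req_dec s b); [subst; lra| lra]).
    destruct (dl_cont _ _ _ (Hd s) (- w s)) as [d [Hd0 Hc]]; [lra|].
    set (t := Rmin (s + d/2) b).
    assert (t1 : s < t) by (unfold t; apply Rmin_glb_lt; lra).
    assert (t2 : t <= s + d/2) by apply Rmin_l.
    assert (t3 : t <= b) by apply Rmin_r.
    assert (At : A t).
    { split; [lra|]. assert (K := Hc t ltac:(rewrite Rabs_pos_eq; lra)).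
      apply Rabs_def2 in K. lra. }
    assert (HH := Hub t At). lra.
  - assert (sa' : a < s) by (destruct (Req_dec s a); [subst; lra| lra]).
    assert (sb' : s < b) by (destruct (Req_dec s b); [subst; lra| lra]).
    destruct (dl_sign w s (w' s) (Hd s) (Hz s H0) (b - s)) as [h [Hh [Hh1 _]]]; [lra|].
    assert (A (s + h)) by (split; lra).
    assert (HH := Hub (s+h) H). lra.
  - destruct (dl_cont _ _ _ (Hd s) (w s)) as [d [Hd0 Hc]]; [lra|].
    assert (Hub2 : is_upper_bound A (s - d/2)).
    { intros t [Ht Hwt]. destruct (Rle_lt_dec t (s - d/2)); auto.
      assert (Hts : t <= s) by (apply Hub; split; auto).
      assert (K := Hc t ltac:(rewrite Rabs_left1; lra)).
      apply Rabs_def2 in K. lra. }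
    assert (HH := Hlub _ Hub2). lra.
Qed.

Lemma gronwall0 (E E' : R -> R) K t1 :
  (forall t, derivable_pt_lim E t (E' t)) -> (forall t, 0 <= E t) ->
  (forall t, Rabs (E' t) <= K * E t) -> E t1 = 0 -> forall t, E t = 0.
Proof.
  intros Hd Hp Hb H0 t.
  destruct (Rtotal_order t t1) as [Hlt|[->|Hgt]]; auto.
  - destruct (MVT_cor2 (fun u => E u * exp (K * u))
      (fun u => E' u * exp (K * u) + E u * (exp (K * u) * K)) t t1 Hlt) as [c [Hc _]].
    { intros c _. apply (dl_mult E (fun u => exp (_ * u))). apply Hd. apply dl_expK. }
    rewrite H0 in Hc.
    assert (B := Hb c). assert (B1 := Rle_abs (E' c)). assert (B2 := Rle_abs (- E' c)). rewrite Rabs_Ropp in B2.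
    assert (Ec := exp_pos (K*c)). assert (Et := exp_pos (K*t)).
    assert (Pt := Hp t).
    assert (E' c * exp (K * c) + E c * (exp (K * c) * K) >= 0) by nra.
    nra.
  - destruct (MVT_cor2 (fun u => E u * exp ((-K) * u))
      (fun u => E' u * exp ((-K) * u) + E u * (exp ((-K) * u) * (-K))) t1 t Hgt) as [c [Hc _]].
    { intros c _. apply (dl_mult E (fun u => exp (_ * u))). apply Hd. apply dl_expK. }
    rewrite H0 in Hc.
    assert (B := Hb c). assert (B1 := Rle_abs (E' c)). assert (B2 := Rle_abs (- E' c)). rewrite Rabs_Ropp in B2.
    assert (Ec := exp_pos ((-K)*c)). assert (Et := exp_pos ((-K)*t)).
    assert (Pt := Hp t).
    assert (E' c * exp ((-K) * c) + E c * (exp ((-K) * c) * (-K)) <= 0) by nra.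
    nra.
Qed.

Lemma quad_bound (al be ga de p q M : R) :
  Rabs al <= M -> Rabs be <= M -> Rabs ga <= M -> Rabs de <= M ->
  Rabs (2 * (p * (al * p + be * q) + q * (ga * p + de * q))) <= 6 * M * (p * p + q * q).
Proof.
  intros A B C D.
  assert (A1 := Rle_abs al). assert (A2 := Rle_abs (-al)). rewrite Rabs_Ropp in A2.
  assert (B1 := Rle_abs be). assert (B2 := Rle_abs (-be)). rewrite Rabs_Ropp in B2.
  assert (C1 := Rle_abs ga). assert (C2 := Rle_abs (-ga)). rewrite Rabs_Ropp in C2.
  assert (D1 := Rle_abs de). assert (D2 := Rle_abs (-de)). rewrite Rabs_Ropp in D2.
  assert (M0 : 0 <= M) by (pose proof (Rabs_pos al); lra).
  assert (0 <= (M - al) * (p*p)) by (apply Rmult_le_pos; [lra|apply Rle_0_sqr]).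
  assert (0 <= (M + al) * (p*p)) by (apply Rmult_le_pos; [lra|apply Rle_0_sqr]).
  assert (0 <= (M - de) * (q*q)) by (apply Rmult_le_pos; [lra|apply Rle_0_sqr]).
  assert (0 <= (M + de) * (q*q)) by (apply Rmult_le_pos; [lra|apply Rle_0_sqr]).
  assert (0 <= (M - be) * ((p+q)*(p+q))) by (apply Rmult_le_pos; [lra|apply Rle_0_sqr]).
  assert (0 <= (M + be) * ((p-q)*(p-q))) by (apply Rmult_le_pos; [lra|apply Rle_0_sqr]).
  assert (0 <= (M - ga) * ((p+q)*(p+q))) by (apply Rmult_le_pos; [lra|apply Rle_0_sqr]).
  assert (0 <= (M + ga) * ((p-q)*(p-q))) by (apply Rmult_le_pos; [lra|apply Rle_0_sqr]).
  assert (0 <= (M + be) * ((p+q)*(p+q))) by (apply Rmult_le_pos; [lra|apply Rle_0_sqr]).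
  assert (0 <= (M - be) * ((p-q)*(p-q))) by (apply Rmult_le_pos; [lra|apply Rle_0_sqr]).
  assert (0 <= (M + ga) * ((p+q)*(p+q))) by (apply Rmult_le_pos; [lra|apply Rle_0_sqr]).
  assert (0 <= (M - ga) * ((p-q)*(p-q))) by (apply Rmult_le_pos; [lra|apply Rle_0_sqr]).
  assert (0 <= M * (p*p+q*q)) by (apply Rmult_le_pos; nra).
  apply Rabs_le. split; nra.
Qed.

Lemma const_of_zero (f : R -> R) : (forall t, derivable_pt_lim f t 0) -> forall t, f t = f 0.
Proof.
  intros H t. destruct (Rtotal_order t 0) as [Hl|[->|Hg]]; auto.
  - destruct (MVT_cor2 f (fun _ => 0) t 0 Hl) as [c [Hc _]]; [intros; apply H|]. lra.
  - destruct (MVT_cor2 f (fun _ => 0) 0 t Hg) as [c [Hc _]]; [intros; apply H|]. lra.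
Qed.

Theorem proposition2 (S fS fC hS hC lamS lamC : R)
  (HS0 : 0 < S) (HS1 : S < 1)
  (HfS : 0 < fS) (HfC : 0 < fC) (HhS : 0 < hS) (HhC : 0 < hC)
  (HlS : 0 < lamS) (HlC : 0 < lamC)
  (sb cr : R -> R) (T : R) (HT : 0 < T)
  (Hsol : is_solution S fS fC hS hC lamS lamC sb cr)
  (Hper : forall t : R, sb (t + T) = sb t /\ cr (t + T) = cr t)
  (Hbox : forall t : R, 0 < sb t < S /\ 0 < cr t < 1 - S) :
  forall t : R, sb t = sb 0 /\ cr t = cr 0.
Proof.
  assert (Ha : 0 < lamS / fS) by (apply Rdiv_lt_0_compat; lra).
  assert (Hc : 0 < lamC / hC) by (apply Rdiv_lt_0_compat; lra).
  pose (p := fun t => SB_rhs S fS hS lamS (sb t) (cr t)).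
  pose (q := fun t => CR_rhs S fC hC lamC (sb t) (cr t)).
  pose (Px := fun t => fS*(S - sb t) - fS*(sb t + lamS/fS) - hS*cr t).
  pose (Py := fun t => - hS * sb t).
  pose (Qx := fun t => - hC * cr t).
  pose (Qy := fun t => fC*(1-S-cr t) - fC*cr t - hC*(sb t + lamC/hC)).
  assert (Hdp : forall t, derivable_pt_lim p t (Px t * p t + Py t * q t)).
  { intro t; destruct (Hsol t) as [H1 H2]. unfold p, SB_rhs.
    eapply dl_eq.
    - apply dl_minus. apply dl_mult. apply dl_mult. apply dl_const.
      apply dl_plus. exact H1. apply dl_const. apply dl_minus. apply dl_const. exact H1.
      apply dl_mult. apply dl_mult. apply dl_const. exact H2. exact H1.
    - cbv beta. unfold Px, Py, p, q, SB_rhs, CR_rhs. ring. }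
  assert (Hdq : forall t, derivable_pt_lim q t (Qx t * p t + Qy t * q t)).
  { intro t; destruct (Hsol t) as [H1 H2]. unfold q, CR_rhs.
    eapply dl_eq.
    - apply dl_minus. apply dl_mult. apply dl_mult. apply dl_const. exact H2.
      apply dl_minus. apply dl_const. exact H2.
      apply dl_mult. apply dl_mult. apply dl_const. apply dl_plus. exact H1. apply dl_const. exact H2.
    - cbv beta. unfold Qx, Qy, p, q, SB_rhs, CR_rhs. ring. }
  destruct (classic (exists t1, p t1 = 0 /\ q t1 = 0)) as [[t1 [Hp1 Hq1]]|Hne].
  - pose (E := fun t => p t * p t + q t * q t).
    pose (M := fS*(S+lamS/fS) + hS + hC + fC + hC*(1 + lamC/hC) + 1).
    assert (HE : forall t, E t = 0).
    { apply (gronwall0 E (fun t => 2 * (p t * (Px t * p t + Py t * q t) + q t * (Qx t * p t + Qy t * q t))) (6 * M) t1).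
      - intro t. eapply dl_eq. apply dl_plus; apply dl_mult; auto. cbv beta. ring.
      - intro t. unfold E. nra.
      - intro t. unfold E. destruct (Hbox t) as [[B1 B2] [B3 B4]].
        apply quad_bound; apply Rabs_le; unfold Px, Py, Qx, Qy, M; split; nra.
      - unfold E. rewrite Hp1, Hq1. ring. }
    assert (Hp0 : forall t, p t = 0) by (intro t; specialize (HE t); unfold E in HE; nra).
    assert (Hq0 : forall t, q t = 0) by (intro t; specialize (HE t); unfold E in HE; nra).
    intro t; split; apply const_of_zero; intro u; destruct (Hsol u) as [H1 H2].
    + eapply dl_eq; [exact H1|]. apply (Hp0 u).
    + eapply dl_eq; [exact H2|]. apply (Hq0 u).
  - assert (HE : forall t, 0 < p t * p t + q t * q t).
    { intro t. destruct (Req_dec (p t) 0) as [H0|H0].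
      - destruct (Req_dec (q t) 0) as [H1|H1].
        + exfalso; apply Hne; exists t; auto.
        + rewrite H0. assert (0 < q t * q t) by (apply Rsqr_pos_lt; auto). lra.
      - assert (0 < p t * p t) by (apply Rsqr_pos_lt; auto). nra. }
    pose (w := fun t => p t * q t).
    pose (w' := fun t => (Px t * p t + Py t * q t) * q t + p t * (Qx t * p t + Qy t * q t)).
    assert (Hdw : forall t, derivable_pt_lim w t (w' t)) by (intro t; apply dl_mult; auto).
    assert (Hwz : forall t, w t = 0 -> w' t < 0).
    { intros t Hw.
      assert (Eq : w' t = (Px t + Qy t) * w t - hS * sb t * (q t * q t) - hC * cr t * (p t * p t))
        by (unfold w', w, Py, Qx; ring).
      rewrite Eq, Hw. destruct (Hbox t) as [[B1 B2] [B3 B4]].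
      assert (0 <= q t * q t) by apply Rle_0_sqr.
      assert (0 <= p t * p t) by apply Rle_0_sqr.
      specialize (HE t).
      assert (K1 : 0 < hS * sb t) by (apply Rmult_lt_0_compat; lra).
      assert (K2 : 0 < hC * cr t) by (apply Rmult_lt_0_compat; lra).
      assert (L1 : 0 <= hS * sb t * (q t * q t)) by (apply Rmult_le_pos; lra).
      assert (L2 : 0 <= hC * cr t * (p t * p t)) by (apply Rmult_le_pos; lra).
      destruct (Req_dec (q t * q t) 0) as [Z|Z].
      + assert (0 < hC * cr t * (p t * p t)) by (apply Rmult_lt_0_compat; lra). lra.
      + assert (0 < hS * sb t * (q t * q t)) by (apply Rmult_lt_0_compat; lra). lra. }
    assert (Hwper : forall t, w (t + T) = w t).
    { intro t. unfold w, p, q. destruct (Hper t) as [-> ->]. reflexivity. }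
    assert (Hnz : forall t, w t <> 0).
    { intros t1 Hw1.
      destruct (dl_sign w t1 (w' t1) (Hdw t1) (Hwz t1 Hw1) (T/2)) as [h1 [Hh1 [A1 _]]]; [lra|].
      assert (Hw2 : w (t1 + T) = 0) by (rewrite Hwper; auto).
      destruct (dl_sign w (t1+T) (w' (t1+T)) (Hdw _) (Hwz _ Hw2) (T/2)) as [h2 [Hh2 [_ A2]]]; [lra|].
      apply (no_upcross w w' (t1 + h1) (t1 + T - h2)); auto; lra. }
    exfalso.
    destruct (MVT_cor2 sb p 0 T HT) as [c [Hc1 _]].
    { intros u _. apply (Hsol u). }
    destruct (Hper 0) as [Hs _]. rewrite Rplus_0_l in Hs. rewrite Hs in Hc1.
    apply (Hnz c). unfold w.
    assert (p c = 0) by nra. rewrite H; ring.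
Qed.
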